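(* Let $q:\mathbb{R}\to\mathbb{C}$ be a Schwartz-class function and set $r(x)=-q^*(-x)$ (the reverse-space reduction, i.e. $Q(x)=\begin{pmatrix}0&q(x)\\-q^*(-x)&0\end{pmatrix}$). Then, for the eigenvalue problem $Y_x=-i\zeta\Lambda Y+QY$ and its adjoint $K_x=i\zeta K\Lambda-KQ$: (1) If $\zeta\in\mathbb{C}_+$ is an eigenvalue with eigenfunction $Y$ and eigenvector $v_0$, then $-\zeta^*\in\mathbb{C}_+$ is also an eigenvalue, $\widehat Y(x)=\sigma_1Y^*(-x)$ is an eigenfunction for it, and its eigenvector is $-\sigma_1 v_0^*$. Consequently, if $\zeta\notin i\mathbb{R}_+$ (so that $-\zeta^*\neq\zeta$), every eigenvector of $-\zeta^*$ is a nonzero scalar multiple of $\sigma_1v_0^*$. (2) If $\zeta\in i\mathbb{R}_+$ is an eigenvalue, then its eigenvector, normalized so that its first component equals $1$, has the form $v_0=[1,e^{i\theta}]^T$ with $\theta\in\mathbb{R}$. (3) If $\bar\zeta\in\mathbb{C}_-$ is an adjoint eigenvalue with adjoint eigenfunction $K$ and adjoint eigenvector $\bar v_0$, then $-\bar\zeta^*\in\mathbb{C}_-$ is also an adjoint eigenvalue, $\widehat K(x)=K^*(-x)\sigma_1$ is an adjoint eigenfunction for it, and its adjoint eigenvector is $-\bar v_0^*\sigma_1$. Consequently, if $\bar\zeta\notin i\mathbb{R}_-$, every adjoint eigenvector of $-\bar\zeta^*$ is a nonzero scalar multiple of $\bar v_0^*\sigma_1$. (4) If $\bar\zeta\in i\mathbb{R}_-$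 is an adjoint eigenvalue, then its adjoint eigenvector, normalized so that its first component equals $1$, has the form $\bar v_0=[1,e^{i\bar\theta}]$ with $\bar\theta\in\mathbb{R}$.
   Context: Notation: $\Lambda=\mathrm{diag}(1,-1)$, $\sigma_1=\begin{pmatrix}0&1\\1&0\end{pmatrix}$, $\mathbb{C}_\pm$ are the open upper/lower half planes, $i\mathbb{R}_\pm$ the positive/negative imaginary half-axes, $^*$ denotes complex conjugation and $^T$ transpose. For complex functions $q(x),r(x)$ decaying rapidly as $|x|\to\infty$, put $Q(x)=\begin{pmatrix}0&q(x)\\ r(x)&0\end{pmatrix}$ and consider the eigenvalue problem $Y_x=-i\zeta\Lambda Y+QY$ ($Y$ a $2\times1$ column) and the adjoint problem $K_x=i\zeta K\Lambda-KQ$ ($K$ a $1\times2$ row). Definition (eigenvalue, eigenvector): $\zeta\in\mathbb{C}_+$ is an eigenvalue if there is a nonzero solution $Y$ (an eigenfunction) of $Y_x=-i\zeta\Lambda Y+QY$ and constants $a,b\in\mathbb{C}$ with $e^{i\zeta x}Y(x)\to[a,0]^T$ as $x\to-\infty$ and $e^{-i\zeta x}Y(x)\to[0,-b]^T$ as $x\to+\infty$; the column vector $v_0=[a,b]^T$ is called the eigenvector associated with $Y$. (For such $\zeta$ the solutions with this decay at $-\infty$ form a one-dimensional space, so eigenvectors of a given eigenvalue are determined up to a nonzero scalar, and $a\neq0$.) Definition (adjoint eigenvalue, adjoint eigenvector): $\bar\zeta\in\mathbb{C}_-$ is an adjoint eigenvalue if there is a nonzero row solution $K$ of $K_x=i\bar\zeta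 K\Lambda-KQ$ and constants $\bar a,\bar b$ with $e^{-i\bar\zeta x}K(x)\to[\bar a,0]$ as $x\to-\infty$ and $e^{i\bar\zeta x}K(x)\to[0,-\bar b]$ as $x\to+\infty$; the row vector $\bar v_0=[\bar a,\bar b]$ is the associated adjoint eigenvector (again determined up to a nonzero scalar, with $\bar a\ne0$). These eigenvalue problems are the $x$-parts of the Lax pair of the coupled system $iq_t+q_{xx}-2q^2r=0$, $ir_t-r_{xx}+2r^2q=0$, which under $r(x,t)=-q^*(-x,t)$ reduces to the reverse-space NLS equation $iq_t(x,t)+q_{xx}(x,t)+2q^2(x,t)q^*(-x,t)=0$; here $q$ plays the role of the initial condition $q(x,0)$. *)

(* Defs.v *)
From Stdlib Require Import Reals Lra.
Open Scope R_scope.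

Definition Cplx : Type := (R * R)%type.
Definition Re (z : Cplx) : R := fst z.
Definition Im (z : Cplx) : R := snd z.
Definition RtoC (a : R) : Cplx := (a, 0).
Definition C0 : Cplx := (0, 0).
Definition C1 : Cplx := (1, 0).
Definition Ci : Cplx := (0, 1).
Definition Cadd (z w : Cplx) : Cplx := (Re z + Re w, Im z + Im w).
Definition Copp (z : Cplx) : Cplx := (- Re z, - Im z).
Definition Csub (z w : Cplx) : Cplx := Cadd z (Copp w).
Definition Cmul (z w : Cplx) : Cplx :=
  (Re z * Re w - Im z * Im w, Re z * Im w + Im z * Re w).
Definition Cconj (z : Cplx) : Cplx := (Re z, - Im z).
Definition Cnorm (z : Cplx) : R := sqrt (Re z * Re z + Im z * Im z).
Definition Cexp (z : Cplx) : Cplx := (exp (Re z) * cos (Im z), exp (Re z) * sin (Im z)).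

Definition has_deriv (f f' : R -> Cplx) : Prop :=
  forall x, derivable_pt_lim (fun t => Re (f t)) x (Re (f' x)) /\
            derivable_pt_lim (fun t => Im (f t)) x (Im (f' x)).

Definition lim_pinf (f : R -> Cplx) (L : Cplx) : Prop :=
  forall eps, 0 < eps -> exists M, forall x, M < x -> Cnorm (Csub (f x) L) < eps.
Definition lim_minf (f : R -> Cplx) (L : Cplx) : Prop :=
  forall eps, 0 < eps -> exists M, forall x, x < M -> Cnorm (Csub (f x) L) < eps.

Definition Schwartz (q : R -> Cplx) : Prop :=
  exists D : nat -> R -> Cplx,
    (forall x, D O x = q x) /\
    (forall n, has_deriv (D n) (D (S n))) /\
    (forall n m, exists B, forall x, Rabs x ^ m * Cnorm (D n x) <= B).

Definition reverse_space (q : R -> Cplx) : R -> Cplx := fun x => Copp (Cconj (q (- x))).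

(* Column vectors in Cplx^2 are pairs (Y1, Y2); row vectors (K1, K2) likewise. *)
Definition C2 : Type := (Cplx * Cplx)%type.

Definition C2_nonzero (f : R -> C2) : Prop := exists x, f x <> (C0, C0).

Definition eigenfunction (q r : R -> Cplx) (zeta : Cplx) (Y : R -> C2) (v0 : C2) : Prop :=
  0 < Im zeta /\
  C2_nonzero Y /\
  has_deriv (fun x => fst (Y x))
            (fun x => Cadd (Cmul (Copp (Cmul Ci zeta)) (fst (Y x))) (Cmul (q x) (snd (Y x)))) /\
  has_deriv (fun x => snd (Y x))
            (fun x => Cadd (Cmul (Cmul Ci zeta) (snd (Y x))) (Cmul (r x) (fst (Y x)))) /\
  lim_minf (fun x => Cmul (Cexp (Cmul (Cmul Ci zeta) (RtoC x))) (fst (Y x))) (fst v0) /\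
  lim_minf (fun x => Cmul (Cexp (Cmul (Cmul Ci zeta) (RtoC x))) (snd (Y x))) C0 /\
  lim_pinf (fun x => Cmul (Cexp (Copp (Cmul (Cmul Ci zeta) (RtoC x)))) (fst (Y x))) C0 /\
  lim_pinf (fun x => Cmul (Cexp (Copp (Cmul (Cmul Ci zeta) (RtoC x)))) (snd (Y x)))
           (Copp (snd v0)).

Definition adj_eigenfunction (q r : R -> Cplx) (zb : Cplx) (K : R -> C2) (vb0 : C2) : Prop :=
  Im zb < 0 /\
  C2_nonzero K /\
  has_deriv (fun x => fst (K x))
            (fun x => Csub (Cmul (Cmul Ci zb) (fst (K x))) (Cmul (snd (K x)) (r x))) /\
  has_deriv (fun x => snd (K x))
            (fun x => Csub (Cmul (Copp (Cmul Ci zb)) (snd (K x))) (Cmul (fst (K x)) (q x))) /\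
  lim_minf (fun x => Cmul (Cexp (Copp (Cmul (Cmul Ci zb) (RtoC x)))) (fst (K x))) (fst vb0) /\
  lim_minf (fun x => Cmul (Cexp (Copp (Cmul (Cmul Ci zb) (RtoC x)))) (snd (K x))) C0 /\
  lim_pinf (fun x => Cmul (Cexp (Cmul (Cmul Ci zb) (RtoC x))) (fst (K x))) C0 /\
  lim_pinf (fun x => Cmul (Cexp (Cmul (Cmul Ci zb) (RtoC x))) (snd (K x)))
           (Copp (snd vb0)).

(* sigma_1 acting on a column (left) / row (right): swaps the components *)
Definition sigma1_swap (v : C2) : C2 := (snd v, fst v).
Definition C2conj (v : C2) : C2 := (Cconj (fst v), Cconj (snd v)).
Definition C2scale (c : Cplx) (v : C2) : C2 := (Cmul c (fst v), Cmul c (snd v)).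
Definition C2opp (v : C2) : C2 := (Copp (fst v), Copp (snd v)).

(* Main.v *)
Require Import Defs.
From Stdlib Require Import Reals Lra Psatz.
From Coquelicot Require Complex.
Open Scope R_scope.

Definition Nm (z : Cplx) : R := Re z * Re z + Im z * Im z.

Lemma Cnorm_Cmod z : Cnorm z = Complex.Cmod z.
Proof. unfold Cnorm, Complex.Cmod, Re, Im. f_equal. ring. Qed.

Lemma Cnorm_add z w : Cnorm (Cadd z w) <= Cnorm z + Cnorm w.
Proof. rewrite !Cnorm_Cmod. exact (Complex.Cmod_triangle z w). Qed.

Lemma Cnorm_mul z w : Cnorm (Cmul z w) = Cnorm z * Cnorm w.
Proof. rewrite !Cnorm_Cmod. exact (Complex.Cmod_mult z w). Qed.

Lemma Cnorm_opp z : Cnorm (Copp z) = Cnorm z.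
Proof. unfold Cnorm, Copp, Re, Im; simpl. f_equal. ring. Qed.

Lemma Cnorm_conj z : Cnorm (Cconj z) = Cnorm z.
Proof. unfold Cnorm, Cconj, Re, Im; simpl. f_equal. ring. Qed.

Lemma Cnorm_ge0 z : 0 <= Cnorm z.
Proof. apply sqrt_pos. Qed.

Lemma Cnorm_eq0 z : Cnorm z = 0 -> z = C0.
Proof. rewrite Cnorm_Cmod. intro H. exact (Complex.Cmod_eq_0 z H). Qed.

Lemma Cnorm_sq z : Cnorm z * Cnorm z = Nm z.
Proof. unfold Cnorm, Nm. apply sqrt_sqrt. nra. Qed.

Ltac cring := repeat match goal with z : Cplx |- _ => destruct z end;
  unfold Csub, Cadd, Copp, Cmul, Cconj, Re, Im, C0, C1, Ci, RtoC in *; simpl; f_equal; ring.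

Lemma lin_bound (c d a b eps : R) : 0 <= c -> 0 <= d -> 0 < eps ->
  a < eps / (1 + c + d) -> b < eps / (1 + c + d) -> 0 <= a -> 0 <= b -> c * a + d * b < eps.
Proof.
  intros. set (K := 1 + c + d) in *. assert (0 < K) by (unfold K; lra).
  assert (eps = K * (eps / K)) by (field; lra).
  assert (c * a <= c * (eps/K)) by (apply Rmult_le_compat_l; lra).
  assert (d * b <= d * (eps/K)) by (apply Rmult_le_compat_l; lra).
  assert (0 < eps / K) by (apply Rdiv_lt_0_compat; lra).
  unfold K in *. nra.
Qed.

Lemma lin_diff (c d F G L1 L2 : Cplx) :
  Csub (Csub (Cmul c F) (Cmul d G)) (Csub (Cmul c L1) (Cmul d L2)) =
  Cadd (Cmul c (Csub F L1)) (Copp (Cmul d (Csub G L2))).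
Proof. cring. Qed.

Lemma lin_norm (c d F G L1 L2 : Cplx) :
  Cnorm (Csub (Csub (Cmul c F) (Cmul d G)) (Csub (Cmul c L1) (Cmul d L2))) <=
  Cnorm c * Cnorm (Csub F L1) + Cnorm d * Cnorm (Csub G L2).
Proof.
  rewrite lin_diff. eapply Rle_trans. apply Cnorm_add.
  rewrite Cnorm_opp, !Cnorm_mul. lra.
Qed.

Lemma minf_lin F G L1 L2 c d : lim_minf F L1 -> lim_minf G L2 ->
  lim_minf (fun x => Csub (Cmul c (F x)) (Cmul d (G x))) (Csub (Cmul c L1) (Cmul d L2)).
Proof.
  intros H1 H2 eps He.
  assert (Hp : 0 < eps / (1 + Cnorm c + Cnorm d)).
  { apply Rdiv_lt_0_compat; auto. pose proof (Cnorm_ge0 c); pose proof (Cnorm_ge0 d); lra. }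
  destruct (H1 _ Hp) as [M1 HM1]. destruct (H2 _ Hp) as [M2 HM2].
  exists (Rmin M1 M2). intros x Hx.
  eapply Rle_lt_trans. apply lin_norm.
  apply lin_bound; auto using Cnorm_ge0.
  apply HM1. pose proof (Rmin_l M1 M2); lra.
  apply HM2. pose proof (Rmin_r M1 M2); lra.
Qed.

Lemma pinf_lin F G L1 L2 c d : lim_pinf F L1 -> lim_pinf G L2 ->
  lim_pinf (fun x => Csub (Cmul c (F x)) (Cmul d (G x))) (Csub (Cmul c L1) (Cmul d L2)).
Proof.
  intros H1 H2 eps He.
  assert (Hp : 0 < eps / (1 + Cnorm c + Cnorm d)).
  { apply Rdiv_lt_0_compat; auto. pose proof (Cnorm_ge0 c); pose proof (Cnorm_ge0 d); lra. }
  destruct (H1 _ Hp) as [M1 HM1]. destruct (H2 _ Hp) as [M2 HM2].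
  exists (Rmax M1 M2). intros x Hx.
  eapply Rle_lt_trans. apply lin_norm.
  apply lin_bound; auto using Cnorm_ge0.
  apply HM1. pose proof (Rmax_l M1 M2); lra.
  apply HM2. pose proof (Rmax_r M1 M2); lra.
Qed.

Lemma minf_ext F G L L' : lim_minf F L -> (forall x, F x = G x) -> L = L' -> lim_minf G L'.
Proof. intros H E <- eps He. destruct (H eps He) as [M HM]. exists M. intros x Hx. rewrite <- E. auto. Qed.

Lemma pinf_ext F G L L' : lim_pinf F L -> (forall x, F x = G x) -> L = L' -> lim_pinf G L'.
Proof. intros H E <- eps He. destruct (H eps He) as [M HM]. exists M. intros x Hx. rewrite <- E. auto. Qed.

Lemma pinf_const L : lim_pinf (fun _ => L) L.
Proof.
  intros eps He. exists 0. intros x _.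
  replace (Csub L L) with C0 by cring. unfold Cnorm, C0, Re, Im; simpl.
  replace (0*0+0*0) with 0 by ring. rewrite sqrt_0. lra.
Qed.

Lemma pinf_unique F L1 L2 : lim_pinf F L1 -> lim_pinf F L2 -> L1 = L2.
Proof.
  intros H1 H2.
  assert (Hz : Cnorm (Csub L1 L2) = 0).
  { apply Rle_antisym; [|apply Cnorm_ge0].
    apply Rnot_lt_le. intro Hc.
    set (e := Cnorm (Csub L1 L2) / 2).
    assert (0 < e) by (unfold e; lra).
    destruct (H1 e H) as [M1 HM1]. destruct (H2 e H) as [M2 HM2].
    set (x := Rmax M1 M2 + 1).
    assert (A1 := HM1 x ltac:(unfold x; pose proof (Rmax_l M1 M2); lra)).
    assert (A2 := HM2 x ltac:(unfold x; pose proof (Rmax_r M1 M2); lra)).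
    assert (Csub L1 L2 = Cadd (Copp (Csub (F x) L1)) (Csub (F x) L2)) by cring.
    pose proof (Cnorm_add (Copp (Csub (F x) L1)) (Csub (F x) L2)).
    rewrite <- H0, Cnorm_opp in H3. unfold e in *. lra. }
  apply Cnorm_eq0 in Hz. revert Hz. destruct L1, L2. unfold Csub, Cadd, Copp, C0, Re, Im; simpl.
  intro E. injection E. intros. f_equal; lra.
Qed.

Lemma pinf_flip F L : lim_pinf F L -> lim_minf (fun x => Cconj (F (- x))) (Cconj L).
Proof.
  intros H eps He. destruct (H eps He) as [M HM]. exists (- M). intros x Hx.
  replace (Csub (Cconj (F (-x))) (Cconj L)) with (Cconj (Csub (F (-x)) L)) by cring.
  rewrite Cnorm_conj. apply HM. lra.
Qed.

Lemma minf_flip F L : lim_minf F L -> lim_pinf (fun x => Cconj (F (- x))) (Cconj L).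
Proof.
  intros H eps He. destruct (H eps He) as [M HM]. exists (- M). intros x Hx.
  replace (Csub (Cconj (F (-x))) (Cconj L)) with (Cconj (Csub (F (-x)) L)) by cring.
  rewrite Cnorm_conj. apply HM. lra.
Qed.

Lemma dmul f g x a b : derivable_pt_lim f x a -> derivable_pt_lim g x b ->
  derivable_pt_lim (fun t => f t * g t) x (a * g x + f x * b).
Proof. intros. exact (derivable_pt_lim_mult f g x a b H H0). Qed.
Lemma dplus f g x a b : derivable_pt_lim f x a -> derivable_pt_lim g x b ->
  derivable_pt_lim (fun t => f t + g t) x (a + b).
Proof. intros. exact (derivable_pt_lim_plus f g x a b H H0). Qed.
Lemma dcomp f g x a b : derivable_pt_lim f x a -> derivable_pt_lim g (f x) b ->
  derivable_pt_lim (fun t => g (f t)) x (b * a).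
Proof. intros. exact (derivable_pt_lim_comp f g x a b H H0). Qed.
Lemma deq f x a b : derivable_pt_lim f x a -> a = b -> derivable_pt_lim f x b.
Proof. intros H <-; exact H. Qed.
Lemma dlin (c x : R) : derivable_pt_lim (fun t => c * t) x c.
Proof. apply deq with (0 * x + c * 1). apply (dmul (fun _ => c) (fun t => t)).
  apply derivable_pt_lim_const. apply derivable_pt_lim_id. ring. Qed.

Lemma dN f f' x : has_deriv f f' ->
  derivable_pt_lim (fun t => Nm (f t)) x (2 * (Re (f x) * Re (f' x) + Im (f x) * Im (f' x))).
Proof.
  intros H. destruct (H x) as [H1 H2]. unfold Nm.
  eapply deq. apply dplus; apply dmul; eauto. cbv beta. ring.
Qed.

Lemma nonincr (G G' : R -> R) : (forall x, derivable_pt_lim G x (G' x)) -> (forall x, G' x <= 0) ->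
  forall a b, a <= b -> G b <= G a.
Proof.
  intros HD HN a b Hab.
  pose (pr := (fun x => exist _ (G' x) (HD x)) : derivable G).
  destruct (Req_dec a b) as [<-|Hne]. lra.
  destruct (MVT_cor1 G a b pr) as [c [Hc _]]. lra.
  simpl in Hc. pose proof (HN c). nra.
Qed.

Lemma cross f1 f2 g1 g2 p1 p2 :
  f1*(p1*g1 - p2*g2) + f2*(p1*g2 + p2*g1) <= sqrt (p1*p1+p2*p2) * (f1*f1+f2*f2+g1*g1+g2*g2)/2.
Proof.
  set (sp := sqrt (p1*p1+p2*p2)).
  assert (Hsp : 0 <= sp) by apply sqrt_pos.
  assert (Hsp2 : sp * sp = p1*p1+p2*p2) by (apply sqrt_sqrt; nra).
  set (X := f1*(p1*g1 - p2*g2) + f2*(p1*g2 + p2*g1)).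
  set (S := f1*f1+f2*f2+g1*g1+g2*g2).
  assert (H1 : X*X <= (p1*p1+p2*p2) * ((f1*f1+f2*f2)*(g1*g1+g2*g2))).
  { unfold X. assert (E : (p1*p1+p2*p2) * ((f1*f1+f2*f2)*(g1*g1+g2*g2)) - X*X =
      (p1*(f2*g1 - f1*g2) - p2*(f1*g1+f2*g2))^2) by (unfold X; ring).
    pose proof (pow2_ge_0 (p1*(f2*g1 - f1*g2) - p2*(f1*g1+f2*g2))). lra. }
  assert (H2 : (f1*f1+f2*f2)*(g1*g1+g2*g2) <= S*S/4).
  { unfold S. assert (S*S/4 - (f1*f1+f2*f2)*(g1*g1+g2*g2) = ((f1*f1+f2*f2) - (g1*g1+g2*g2))^2/4) by (unfold S; field).
    pose proof (pow2_ge_0 ((f1*f1+f2*f2) - (g1*g1+g2*g2))). lra. }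
  assert (H3 : X*X <= (sp*S/2)*(sp*S/2)).
  { replace ((sp*S/2)*(sp*S/2)) with ((sp*sp) * (S*S/4)) by field.
    rewrite Hsp2. eapply Rle_trans. apply H1. apply Rmult_le_compat_l. nra. exact H2. }
  assert (0 <= S) by (unfold S; nra).
  assert (0 <= sp*S/2) by (apply Rmult_le_pos; [apply Rmult_le_pos|]; lra).
  fold X. nra.
Qed.

Lemma bracket (fx gx a b px tx : Cplx) lam : lam + Re a <= 0 -> lam + Re b <= 0 ->
  let F' := Cadd (Cmul a fx) (Cmul px gx) in
  let G' := Cadd (Cmul b gx) (Cmul tx fx) in
  2*(Re fx * Re F' + Im fx * Im F') + 2*(Re gx * Re G' + Im gx * Im G') + 2*lam*(Nm fx + Nm gx)
  <= (Cnorm px + Cnorm tx) * (Nm fx + Nm gx).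
Proof.
  intros Ha Hb F' G'. unfold F', G'.
  destruct fx as [f1 f2], gx as [g1 g2], a as [a1 a2], b as [b1 b2], px as [p1 p2], tx as [t1 t2].
  unfold Cnorm, Nm, Cadd, Cmul, Re, Im in *; simpl in *.
  pose proof (cross f1 f2 g1 g2 p1 p2).
  pose proof (cross g1 g2 f1 f2 t1 t2).
  assert (0 <= f1*f1+f2*f2) by nra. assert (0 <= g1*g1+g2*g2) by nra.
  assert ((lam + a1) * (f1*f1+f2*f2) <= 0) by nra.
  assert ((lam + b1) * (g1*g1+g2*g2) <= 0) by nra.
  nra.
Qed.

Lemma Nm_ge0 z : 0 <= Nm z.
Proof. unfold Nm. nra. Qed.

Lemma Nm_eq0 z : Nm z = 0 -> z = C0.
Proof. destruct z as [z1 z2]. unfold Nm, Re, Im, C0; simpl. intro. 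
  assert (z1 = 0) by nra. assert (z2 = 0) by nra. subst; reflexivity. Qed.

Lemma decay (f g p t : R -> Cplx) (a b : Cplx) (lam C : R) :
  lam + Re a <= 0 -> lam + Re b <= 0 ->
  (forall x, (Cnorm (p x) + Cnorm (t x)) * (1 + x^2) <= C) ->
  has_deriv f (fun x => Cadd (Cmul a (f x)) (Cmul (p x) (g x))) ->
  has_deriv g (fun x => Cadd (Cmul b (g x)) (Cmul (t x) (f x))) ->
  (forall eps, 0 < eps -> exists M, forall x, x < M -> exp (2*lam*x) * (Nm (f x) + Nm (g x)) < eps) ->
  forall x, f x = C0 /\ g x = C0.
Proof.
  intros Ha Hb Hpt Hf Hg Hlim.
  assert (HC : 0 <= C).
  { specialize (Hpt 0). pose proof (Cnorm_ge0 (p 0)). pose proof (Cnorm_ge0 (t 0)).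
    assert (0 <= (Cnorm (p 0) + Cnorm (t 0)) * (1 + 0^2)) by (simpl; nra). lra. }
  set (P := fun x => Nm (f x) + Nm (g x)).
  set (Gf := fun x => exp (- C * atan x) * (exp (2*lam*x) * P x)).
  set (dP := fun x => 2 * (Re (f x) * Re (Cadd (Cmul a (f x)) (Cmul (p x) (g x))) + Im (f x) * Im (Cadd (Cmul a (f x)) (Cmul (p x) (g x))))
                   + 2 * (Re (g x) * Re (Cadd (Cmul b (g x)) (Cmul (t x) (f x))) + Im (g x) * Im (Cadd (Cmul b (g x)) (Cmul (t x) (f x))))).
  set (dG := fun x => exp (- C * atan x) * (- C * / (1 + x^2)) * (exp (2*lam*x) * P x)
      + exp (- C * atan x) * (exp (2*lam*x) * (2*lam) * P x + exp (2*lam*x) * dP x)).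
  assert (HD : forall x, derivable_pt_lim Gf x (dG x)).
  { intro x. unfold Gf, dG.
    apply (dmul (fun t => exp (- C * atan t)) (fun t => exp (2*lam*t) * P t)).
    - apply (dcomp (fun t => - C * atan t) exp).
      apply deq with (0 * atan x + - C * / (1 + x^2)).
      apply (dmul (fun _ => - C) atan). apply derivable_pt_lim_const. apply derivable_pt_lim_atan. ring.
      apply derivable_pt_lim_exp.
    - apply (dmul (fun t => exp (2*lam*t)) P).
      + apply (dcomp (fun t => 2*lam*t) exp). apply dlin. apply derivable_pt_lim_exp.
      + unfold P, dP. eapply deq. apply dplus; apply dN; eassumption. reflexivity. }
  assert (HN : forall x, dG x <= 0).
  { intro x. unfold dG.
    pose proof (bracket (f x) (g x) a b (p x) (t x) lam Ha Hb). simpl in H. fold (dP x) in H.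
    assert (Hb1 : (Cnorm (p x) + Cnorm (t x)) <= C * / (1 + x^2)).
    { assert (0 < 1 + x^2) by (pose proof (pow2_ge_0 x); lra).
      specialize (Hpt x). apply Rmult_le_reg_r with (1 + x^2). lra.
      rewrite Rmult_assoc, Rinv_l by lra. lra. }
    assert (HP : 0 <= P x) by (unfold P; pose proof (Nm_ge0 (f x)); pose proof (Nm_ge0 (g x)); lra).
    assert (dP x + 2*lam*P x <= C * / (1 + x^2) * P x).
    { apply Rle_trans with ((Cnorm (p x) + Cnorm (t x)) * P x).
      - unfold P, dP. simpl. lra.
      - apply Rmult_le_compat_r. exact HP. exact Hb1. }
    pose proof (exp_pos (- C * atan x)). pose proof (exp_pos (2*lam*x)).
    replace (exp (- C * atan x) * (- C * / (1 + x ^ 2)) * (exp (2 * lam * x) * P x) +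
      exp (- C * atan x) * (exp (2 * lam * x) * (2 * lam) * P x + exp (2 * lam * x) * dP x))
      with ((exp (- C * atan x) * exp (2 * lam * x)) * ((dP x + 2*lam*P x) - C * / (1 + x^2) * P x)) by ring.
    assert (0 < exp (- C * atan x) * exp (2 * lam * x)) by (apply Rmult_lt_0_compat; lra).
    nra. }
  assert (Hmono := nonincr Gf dG HD HN).
  assert (HPge : forall x, 0 <= P x) by (intro; unfold P; pose proof (Nm_ge0 (f x)); pose proof (Nm_ge0 (g x)); lra).
  assert (HGge : forall x, 0 <= Gf x).
  { intro. unfold Gf. pose proof (exp_pos (- C * atan x)). pose proof (exp_pos (2*lam*x)). specialize (HPge x).
    apply Rmult_le_pos. lra. apply Rmult_le_pos; lra. }
  set (K := exp (C * (PI/2))).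
  assert (HK : 0 < K) by apply exp_pos.
  assert (HGb : forall x, Gf x <= K * (exp (2*lam*x) * P x)).
  { intro. unfold Gf, K. apply Rmult_le_compat_r.
    pose proof (exp_pos (2*lam*x)). specialize (HPge x). nra.
    assert (Hle : - C * atan x <= C * (PI/2)) by (pose proof (atan_bound x); nra).
    destruct (Rle_lt_or_eq_dec _ _ Hle) as [Hl|He].
    left; apply exp_increasing; exact Hl. rewrite He; lra. }
  assert (HG0 : forall x, Gf x = 0).
  { intro x. apply Rle_antisym; [|apply HGge]. apply Rnot_lt_le. intro Hpos.
    destruct (Hlim (Gf x / K)) as [M HM]. apply Rdiv_lt_0_compat; lra.
    set (y := Rmin M x - 1).
    assert (y < M) by (unfold y; pose proof (Rmin_l M x); lra).
    assert (y <= x) by (unfold y; pose proof (Rmin_r M x); lra).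
    specialize (HM y H). fold (P y) in HM.
    pose proof (Hmono y x H0). pose proof (HGb y).
    assert (K * (exp (2 * lam * y) * P y) < K * (Gf x / K)) by (apply Rmult_lt_compat_l; lra).
    replace (K * (Gf x / K)) with (Gf x) in H3 by (field; lra). lra. }
  intro x. specialize (HG0 x). unfold Gf in HG0.
  pose proof (exp_pos (- C * atan x)). pose proof (exp_pos (2*lam*x)).
  assert (P x = 0).
  { apply Rmult_integral in HG0. destruct HG0. lra. apply Rmult_integral in H1. destruct H1. lra. auto. }
  unfold P in H1. pose proof (Nm_ge0 (f x)). pose proof (Nm_ge0 (g x)).
  split; apply Nm_eq0; lra.
Qed.

Lemma dscal c f x a : derivable_pt_lim f x a -> derivable_pt_lim (fun t => c * f t) x (c * a).
Proof. intro H. eapply deq. apply (dmul (fun _ => c) f). apply derivable_pt_lim_const. exact H. ring. Qed.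
Lemma dminus f g x a b : derivable_pt_lim f x a -> derivable_pt_lim g x b ->
  derivable_pt_lim (fun t => f t - g t) x (a - b).
Proof. intros. exact (derivable_pt_lim_minus f g x a b H H0). Qed.
Lemma dopp f x a : derivable_pt_lim f x a -> derivable_pt_lim (fun t => - f t) x (- a).
Proof. intros. exact (derivable_pt_lim_opp f x a H). Qed.

Lemma hd_ext f f' f'' : has_deriv f f' -> (forall x, f' x = f'' x) -> has_deriv f f''.
Proof. intros H E x. rewrite <- E. apply H. Qed.

Lemma hd_lin f g f' g' c d : has_deriv f f' -> has_deriv g g' ->
  has_deriv (fun x => Csub (Cmul c (f x)) (Cmul d (g x))) (fun x => Csub (Cmul c (f' x)) (Cmul d (g' x))).
Proof.
  intros Hf Hg x. destruct (Hf x) as [F1 F2], (Hg x) as [G1 G2]. split.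
  - change (derivable_pt_lim (fun t => (Re c * Re (f t) - Im c * Im (f t)) + - (Re d * Re (g t) - Im d * Im (g t))) x
      ((Re c * Re (f' x) - Im c * Im (f' x)) + - (Re d * Re (g' x) - Im d * Im (g' x)))).
    apply dplus. apply dminus; apply dscal; assumption. apply dopp. apply dminus; apply dscal; assumption.
  - change (derivable_pt_lim (fun t => (Re c * Im (f t) + Im c * Re (f t)) + - (Re d * Im (g t) + Im d * Re (g t))) x
      ((Re c * Im (f' x) + Im c * Re (f' x)) + - (Re d * Im (g' x) + Im d * Re (g' x)))).
    apply dplus. apply dplus; apply dscal; assumption. apply dopp. apply dplus; apply dscal; assumption.
Qed.

Lemma Nm_Cexp e w : Nm (Cmul (Cexp e) w) = exp (Re e) * exp (Re e) * Nm w.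
Proof.
  destruct e as [e1 e2], w as [w1 w2]. unfold Nm, Cmul, Cexp, Re, Im; simpl.
  pose proof (sin2_cos2 e2). unfold Rsqr in H.
  transitivity (exp e1 * exp e1 * (w1 * w1 + w2 * w2) * (sin e2 * sin e2 + cos e2 * cos e2)). ring.
  rewrite H. ring.
Qed.

Lemma limN (E : R -> Cplx) h lam : lim_minf (fun x => Cmul (Cexp (E x)) (h x)) C0 ->
  (forall x, Re (E x) = lam * x) ->
  forall eps, 0 < eps -> exists M, forall x, x < M -> exp (2*lam*x) * Nm (h x) < eps.
Proof.
  intros H HE eps He. destruct (H (sqrt eps)) as [M HM]. apply sqrt_lt_R0; exact He.
  exists M. intros x Hx. specialize (HM x Hx).
  replace (Csub (Cmul (Cexp (E x)) (h x)) C0) with (Cmul (Cexp (E x)) (h x)) in HM by cring.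
  assert (Nm (Cmul (Cexp (E x)) (h x)) < eps).
  { rewrite <- Cnorm_sq. pose proof (Cnorm_ge0 (Cmul (Cexp (E x)) (h x))).
    rewrite <- (sqrt_sqrt eps) by lra. apply Rmult_le_0_lt_compat; lra. }
  rewrite Nm_Cexp, HE in H0. rewrite <- exp_plus in H0.
  replace (lam * x + lam * x) with (2*lam*x) in H0 by ring. exact H0.
Qed.

Definition geig (f g p t : R -> Cplx) (a b : Cplx) (E : R -> Cplx) (A B : Cplx) : Prop :=
  has_deriv f (fun x => Cadd (Cmul a (f x)) (Cmul (p x) (g x))) /\
  has_deriv g (fun x => Cadd (Cmul b (g x)) (Cmul (t x) (f x))) /\
  lim_minf (fun x => Cmul (Cexp (E x)) (f x)) A /\
  lim_minf (fun x => Cmul (Cexp (E x)) (g x)) C0 /\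
  lim_pinf (fun x => Cmul (Cexp (Copp (E x))) (g x)) B.

Definition gparams (p t : R -> Cplx) (a b : Cplx) (E : R -> Cplx) : Prop :=
  exists lam C, lam + Re a <= 0 /\ lam + Re b <= 0 /\
  (forall x, (Cnorm (p x) + Cnorm (t x)) * (1 + x^2) <= C) /\
  (forall x, Re (E x) = lam * x).

Lemma gdecay f g p t a b E B : gparams p t a b E -> geig f g p t a b E C0 B ->
  forall x, f x = C0 /\ g x = C0.
Proof.
  intros [lam [C [H1 [H2 [H3 H4]]]]] [G1 [G2 [G3 [G4 G5]]]].
  apply (decay f g p t a b lam C); auto.
  intros eps He.
  destruct (limN E f lam G3 H4 (eps/2)) as [M1 HM1]. lra.
  destruct (limN E g lam G4 H4 (eps/2)) as [M2 HM2]. lra.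
  exists (Rmin M1 M2). intros x Hx.
  assert (x < M1) by (pose proof (Rmin_l M1 M2); lra).
  assert (x < M2) by (pose proof (Rmin_r M1 M2); lra).
  specialize (HM1 x H). specialize (HM2 x H0). nra.
Qed.

Lemma gnonzero f g p t a b E A B : gparams p t a b E -> geig f g p t a b E A B ->
  (exists x, (f x, g x) <> (C0, C0)) -> A <> C0.
Proof.
  intros HP HG [x Hx] HA. subst A. destruct (gdecay f g p t a b E B HP HG x) as [E1 E2].
  apply Hx. rewrite E1, E2. reflexivity.
Qed.

Lemma guniq f g f2 g2 p t a b E A B A2 B2 : gparams p t a b E ->
  geig f g p t a b E A B -> geig f2 g2 p t a b E A2 B2 -> Cmul A2 B = Cmul A B2.
Proof.
  intros HP [G1 [G2 [G3 [G4 G5]]]] [K1 [K2 [K3 [K4 K5]]]].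
  set (W1 := fun x => Csub (Cmul A2 (f x)) (Cmul A (f2 x))).
  set (W2 := fun x => Csub (Cmul A2 (g x)) (Cmul A (g2 x))).
  assert (HW : geig W1 W2 p t a b E C0 (Csub (Cmul A2 B) (Cmul A B2))).
  { unfold geig, W1, W2. split; [|split; [|split; [|split]]].
    - eapply hd_ext. apply (hd_lin _ _ _ _ A2 A G1 K1). intro x; cring.
    - eapply hd_ext. apply (hd_lin _ _ _ _ A2 A G2 K2). intro x; cring.
    - eapply minf_ext. apply (minf_lin _ _ _ _ A2 A G3 K3). intro x; cring. cring.
    - eapply minf_ext. apply (minf_lin _ _ _ _ A2 A G4 K4). intro x; cring. cring.
    - eapply pinf_ext. apply (pinf_lin _ _ _ _ A2 A G5 K5). intro x; cring. reflexivity. }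
  pose proof (gdecay W1 W2 p t a b E _ HP HW) as Z.
  destruct HW as [_ [_ [_ [_ HW5]]]].
  assert (HC : lim_pinf (fun x => Cmul (Cexp (Copp (E x))) (W2 x)) C0).
  { eapply pinf_ext. apply (pinf_const C0). intro x. destruct (Z x) as [_ ->]. cring. reflexivity. }
  pose proof (pinf_unique _ _ _ HW5 HC) as U.
  revert U. clear. destruct A2, B, A, B2. unfold Csub, Cadd, Copp, Cmul, C0, Re, Im; simpl.
  intro U. injection U. intros. f_equal; lra.
Qed.

Lemma nz_pos (z : Cplx) : z <> C0 -> 0 < Re z * Re z + Im z * Im z.
Proof.
  destruct z as [z1 z2]; unfold Re, Im, C0; simpl; intro H.
  destruct (Req_dec z1 0); destruct (Req_dec z2 0); try (subst; exfalso; apply H; reflexivity); nra.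
Qed.

Lemma solve_c (a' b' bs as_ : Cplx) : bs <> C0 -> a' <> C0 -> Cmul a' as_ = Cmul bs b' ->
  exists c, c <> C0 /\ (a', b') = C2scale c (bs, as_).
Proof.
  intros Hb Ha E. pose proof (nz_pos _ Hb) as Hn.
  destruct a' as [a1 a2], b' as [b1 b2], bs as [s1 s2], as_ as [t1 t2].
  unfold Re, Im in Hn; simpl in Hn. remember (s1*s1+s2*s2) as n eqn:Hn'.
  unfold Cmul, Re, Im in E; simpl in E. injection E; intros E2 E1.
  exists ((a1*s1 + a2*s2)/n, (a2*s1 - a1*s2)/n). split.
  - intro Hc. injection Hc; intros H2 H1. apply Ha.
    assert (a1*s1 + a2*s2 = 0). { apply (Rmult_eq_reg_r (/n)). rewrite Rmult_0_l. exact H1. apply Rinv_neq_0_compat; lra. }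
    assert (a2*s1 - a1*s2 = 0). { apply (Rmult_eq_reg_r (/n)). rewrite Rmult_0_l. exact H2. apply Rinv_neq_0_compat; lra. }
    assert (a1 * n = s1*(a1*s1+a2*s2) - s2*(a2*s1-a1*s2)) by (rewrite Hn'; ring).
    assert (a2 * n = s2*(a1*s1+a2*s2) + s1*(a2*s1-a1*s2)) by (rewrite Hn'; ring).
    rewrite H, H0 in H3, H4. ring_simplify in H3. ring_simplify in H4.
    unfold C0. apply Rmult_integral in H3. apply Rmult_integral in H4.
    f_equal; [destruct H3|destruct H4]; lra.
  - unfold C2scale, Cmul, Re, Im; simpl. f_equal; f_equal;
      apply (Rmult_eq_reg_r n); try lra; field_simplify; try lra; clear Hb Ha E; rewrite Hn'.
    + ring. + ring.
    + transitivity (s1*(s1*b1 - s2*b2) + s2*(s1*b2+s2*b1)); [ring|rewrite <- E1, <- E2; ring].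
    + transitivity (s1*(s1*b2 + s2*b1) - s2*(s1*b1-s2*b2)); [ring|rewrite <- E1, <- E2; ring].
Qed.

Lemma angle u v : u*u + v*v = 1 -> exists th, cos th = u /\ sin th = v.
Proof.
  intro H. assert (Hu : -1 <= u <= 1) by nra.
  assert (E : 1 - u² = v*v) by (unfold Rsqr; lra).
  destruct (Rle_dec 0 v) as [Hv|Hv].
  - exists (acos u). split. apply cos_acos; exact Hu.
    rewrite sin_acos by exact Hu. rewrite E. apply sqrt_square; exact Hv.
  - exists (- acos u). split. rewrite cos_neg. apply cos_acos; exact Hu.
    rewrite sin_neg, sin_acos by exact Hu. rewrite E.
    replace (v*v) with ((-v)*(-v)) by ring. rewrite sqrt_square by lra. ring.
Qed.

Lemma unit_phase (a b : Cplx) : a <> C0 -> Nm a = Nm b -> exists th, b = Cmul a (Cexp (0, th)).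
Proof.
  intros Ha E. pose proof (nz_pos _ Ha) as Hn.
  destruct a as [a1 a2], b as [b1 b2]. unfold Nm, Re, Im in *; simpl in *.
  remember (a1*a1+a2*a2) as n eqn:Hn'.
  set (u := (b1*a1 + b2*a2)/n). set (v := (b2*a1 - b1*a2)/n).
  assert (Huv : u*u + v*v = 1).
  { unfold u, v. field_simplify; [|lra].
    transitivity (((a1*a1+a2*a2)*(b1*b1+b2*b2)) / n^2). field; lra.
    rewrite <- Hn', <- E. field. lra. }
  destruct (angle u v Huv) as [th [Hc Hs]]. exists th.
  unfold Cmul, Cexp, Re, Im; simpl. rewrite exp_0, !Rmult_1_l, Hc, Hs.
  unfold u, v. f_equal; apply (Rmult_eq_reg_r n); try lra; field_simplify; try lra; rewrite Hn'; ring.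
Qed.

Ltac cring2 := repeat match goal with z : Cplx |- _ => destruct z | z : C2 |- _ => destruct z end;
  unfold sigma1_swap, C2conj, C2opp, C2scale, Csub, Cadd, Copp, Cmul, Cconj, Re, Im, C0, C1, Ci, RtoC in *; simpl; f_equal; ring.

Lemma qbound q : Schwartz q -> exists C, forall x,
  (Cnorm (q x) + Cnorm (reverse_space q x)) * (1 + x^2) <= C.
Proof.
  intros [D [H0 [_ H2]]]. destruct (H2 0%nat 0%nat) as [B0 HB0]. destruct (H2 0%nat 2%nat) as [B2 HB2].
  assert (HQ : forall y, Cnorm (q y) * (1 + y^2) <= B0 + B2).
  { intro y. specialize (HB0 y). specialize (HB2 y). rewrite H0 in HB0, HB2.
    rewrite pow2_abs in HB2. simpl in HB0. lra. }
  exists (2 * (B0 + B2)). intro x. unfold reverse_space. rewrite Cnorm_opp, Cnorm_conj.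
  pose proof (HQ x). pose proof (HQ (-x)). replace ((-x)^2) with (x^2) in H1 by ring. lra.
Qed.

Lemma hd_flip f f' : has_deriv f f' -> has_deriv (fun x => Cconj (f (-x))) (fun x => Copp (Cconj (f' (-x)))).
Proof.
  intros H x. destruct (H (-x)) as [H1 H2].
  assert (Hm : derivable_pt_lim (fun t => - t) x (-1)).
  { apply deq with (- 1). apply dopp. apply derivable_pt_lim_id. ring. }
  split.
  - change (derivable_pt_lim (fun t => Re (f (- t))) x (- Re (f' (-x)))).
    apply deq with (Re (f' (-x)) * (-1)). apply (dcomp (fun t => - t) (fun t => Re (f t))). exact Hm. exact H1. ring.
  - change (derivable_pt_lim (fun t => - Im (f (- t))) x (- - Im (f' (-x)))).
    apply dopp. apply deq with (Im (f' (-x)) * (-1)). apply (dcomp (fun t => - t) (fun t => Im (f t))). exact Hm. exact H2. ring.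
Qed.

Lemma Cexp_conj z : Cexp (Cconj z) = Cconj (Cexp z).
Proof. destruct z as [z1 z2]. unfold Cexp, Cconj, Re, Im; simpl. rewrite cos_neg, sin_neg. f_equal. ring. Qed.

Lemma Cmul_conj z w : Cconj (Cmul z w) = Cmul (Cconj z) (Cconj w).
Proof. cring2. Qed.

Lemma LA zeta x w : Cmul (Cexp (Cmul (Cmul Ci (Copp (Cconj zeta))) (RtoC x))) (Cconj w)
  = Cconj (Cmul (Cexp (Copp (Cmul (Cmul Ci zeta) (RtoC (-x))))) w).
Proof.
  rewrite Cmul_conj, <- Cexp_conj. f_equal. f_equal. cring2.
Qed.

Lemma LB zeta x w : Cmul (Cexp (Copp (Cmul (Cmul Ci (Copp (Cconj zeta))) (RtoC x)))) (Cconj w)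
  = Cconj (Cmul (Cexp (Cmul (Cmul Ci zeta) (RtoC (-x)))) w).
Proof.
  rewrite Cmul_conj, <- Cexp_conj. f_equal. f_equal. cring2.
Qed.

Lemma sym_dir q zeta Y v0 : eigenfunction q (reverse_space q) zeta Y v0 ->
  eigenfunction q (reverse_space q) (Copp (Cconj zeta)) (fun x => sigma1_swap (C2conj (Y (- x))))
    (C2opp (sigma1_swap (C2conj v0))).
Proof.
  intros [H1 [[x0 H2] [H3 [H4 [H5 [H6 [H7 H8]]]]]]].
  split; [|split; [|split; [|split; [|split; [|split; [|split]]]]]].
  - destruct zeta; unfold Copp, Cconj, Im, Re in *; simpl in *; lra.
  - exists (- x0). rewrite Ropp_involutive. intro E. apply H2. revert E.
    destruct (Y x0) as [[a1 a2] [b1 b2]]. unfold sigma1_swap, C2conj, Cconj, C0, Re, Im; simpl.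
    intro E. injection E; intros. f_equal; f_equal; lra.
  - change (has_deriv (fun x => Cconj (snd (Y (- x))))
      (fun x => Cadd (Cmul (Copp (Cmul Ci (Copp (Cconj zeta)))) (Cconj (snd (Y (- x))))) (Cmul (q x) (Cconj (fst (Y (-x))))))).
    eapply hd_ext. apply (hd_flip (fun x => snd (Y x))). exact H4.
    intro x. simpl. unfold reverse_space. rewrite Ropp_involutive.
    generalize (q x) (Y (-x)). intros. cring2.
  - change (has_deriv (fun x => Cconj (fst (Y (- x))))
      (fun x => Cadd (Cmul (Cmul Ci (Copp (Cconj zeta))) (Cconj (fst (Y (- x))))) (Cmul (reverse_space q x) (Cconj (snd (Y (-x))))))).
    eapply hd_ext. apply (hd_flip (fun x => fst (Y x))). exact H3.
    intro x. simpl. unfold reverse_space.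
    generalize (q (-x)) (Y (-x)). intros. cring2.
  - eapply minf_ext. apply (pinf_flip _ _ H8). intro x. symmetry. apply LA.
    destruct v0; cring2.
  - eapply minf_ext. apply (pinf_flip _ _ H7). intro x. symmetry. apply LA.
    cring2.
  - eapply pinf_ext. apply (minf_flip _ _ H6). intro x. symmetry. apply LB.
    cring2.
  - eapply pinf_ext. apply (minf_flip _ _ H5). intro x. symmetry. apply LB.
    destruct v0; cring2.
Qed.

Lemma sym_adj q zb K vb0 : adj_eigenfunction q (reverse_space q) zb K vb0 ->
  adj_eigenfunction q (reverse_space q) (Copp (Cconj zb)) (fun x => sigma1_swap (C2conj (K (- x))))
    (C2opp (sigma1_swap (C2conj vb0))).
Proof.
  intros [H1 [[x0 H2] [H3 [H4 [H5 [H6 [H7 H8]]]]]]].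
  split; [|split; [|split; [|split; [|split; [|split; [|split]]]]]].
  - destruct zb; unfold Copp, Cconj, Im, Re in *; simpl in *; lra.
  - exists (- x0). rewrite Ropp_involutive. intro E. apply H2. revert E.
    destruct (K x0) as [[a1 a2] [b1 b2]]. unfold sigma1_swap, C2conj, Cconj, C0, Re, Im; simpl.
    intro E. injection E; intros. f_equal; f_equal; lra.
  - change (has_deriv (fun x => Cconj (snd (K (- x))))
      (fun x => Csub (Cmul (Cmul Ci (Copp (Cconj zb))) (Cconj (snd (K (- x))))) (Cmul (Cconj (fst (K (-x)))) (reverse_space q x)))).
    eapply hd_ext. apply (hd_flip (fun x => snd (K x))). exact H4.
    intro x. simpl. unfold reverse_space.
    generalize (q (-x)) (K (-x)). intros. cring2.
  - change (has_deriv (fun x => Cconj (fst (K (- x))))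
      (fun x => Csub (Cmul (Copp (Cmul Ci (Copp (Cconj zb)))) (Cconj (fst (K (- x))))) (Cmul (Cconj (snd (K (-x)))) (q x)))).
    eapply hd_ext. apply (hd_flip (fun x => fst (K x))). exact H3.
    intro x. simpl. unfold reverse_space. rewrite Ropp_involutive.
    generalize (q x) (K (-x)). intros. cring2.
  - eapply minf_ext. apply (pinf_flip _ _ H8). intro x. symmetry. apply LB.
    destruct vb0; cring2.
  - eapply minf_ext. apply (pinf_flip _ _ H7). intro x. symmetry. apply LB.
    cring2.
  - eapply pinf_ext. apply (minf_flip _ _ H6). intro x. symmetry. apply LA.
    cring2.
  - eapply pinf_ext. apply (minf_flip _ _ H5). intro x. symmetry. apply LA.
    destruct vb0; cring2.
Qed.

Lemma geig_dir q zeta Y v0 : eigenfunction q (reverse_space q) zeta Y v0 ->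
  geig (fun x => fst (Y x)) (fun x => snd (Y x)) q (reverse_space q) (Copp (Cmul Ci zeta)) (Cmul Ci zeta)
    (fun x => Cmul (Cmul Ci zeta) (RtoC x)) (fst v0) (Copp (snd v0)).
Proof. intros [_ [_ [H3 [H4 [H5 [H6 [_ H8]]]]]]]. unfold geig. auto. Qed.

Lemma params_dir q zeta : Schwartz q -> 0 < Im zeta ->
  gparams q (reverse_space q) (Copp (Cmul Ci zeta)) (Cmul Ci zeta) (fun x => Cmul (Cmul Ci zeta) (RtoC x)).
Proof.
  intros hq Hi. destruct (qbound q hq) as [C HC]. exists (- Im zeta), C.
  split; [|split; [|split]]; auto.
  - destruct zeta; unfold Copp, Cmul, Ci, Re, Im in *; simpl in *; lra.
  - destruct zeta; unfold Copp, Cmul, Ci, Re, Im in *; simpl in *; lra.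
  - intro x. destruct zeta; unfold Copp, Cmul, Ci, RtoC, Re, Im in *; simpl in *; ring.
Qed.

Lemma Copp_Copp z : Copp (Copp z) = z.
Proof. destruct z. unfold Copp, Re, Im; simpl. f_equal; ring. Qed.

Lemma geig_adj q zb K vb0 : adj_eigenfunction q (reverse_space q) zb K vb0 ->
  geig (fun x => fst (K x)) (fun x => snd (K x)) (fun x => Copp (reverse_space q x)) (fun x => Copp (q x))
    (Cmul Ci zb) (Copp (Cmul Ci zb))
    (fun x => Copp (Cmul (Cmul Ci zb) (RtoC x))) (fst vb0) (Copp (snd vb0)).
Proof.
  intros [_ [_ [H3 [H4 [H5 [H6 [_ H8]]]]]]]. unfold geig.
  split; [|split; [|split; [|split]]]; auto.
  - eapply hd_ext. exact H3. intro x. cbv beta. generalize (reverse_space q x) (K x). intros. cring2.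
  - eapply hd_ext. exact H4. intro x. cbv beta. generalize (q x) (K x). intros. cring2.
  - eapply pinf_ext. exact H8. intro x. rewrite Copp_Copp. reflexivity. reflexivity.
Qed.

Lemma params_adj q zb : Schwartz q -> Im zb < 0 ->
  gparams (fun x => Copp (reverse_space q x)) (fun x => Copp (q x)) (Cmul Ci zb) (Copp (Cmul Ci zb))
    (fun x => Copp (Cmul (Cmul Ci zb) (RtoC x))).
Proof.
  intros hq Hi. destruct (qbound q hq) as [C HC]. exists (Im zb), C.
  split; [|split; [|split]].
  - destruct zb; unfold Copp, Cmul, Ci, Re, Im in *; simpl in *; lra.
  - destruct zb; unfold Copp, Cmul, Ci, Re, Im in *; simpl in *; lra.
  - intro x. rewrite !Cnorm_opp. specialize (HC x). lra.
  - intro x. destruct zb; unfold Copp, Cmul, Ci, RtoC, Re, Im in *; simpl in *; ring.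
Qed.

Lemma nzconv (Y : R -> C2) : C2_nonzero Y -> exists x, (fst (Y x), snd (Y x)) <> (C0, C0).
Proof. intros [x Hx]. exists x. rewrite <- surjective_pairing. exact Hx. Qed.

Lemma negconj_id z : Re z = 0 -> Copp (Cconj z) = z.
Proof. destruct z as [z1 z2]. unfold Re, Im, Copp, Cconj; simpl. intro. f_equal; lra. Qed.

Lemma step1 (a b a' b' : Cplx) : Cmul a' (Copp (Copp (Cconj a))) = Cmul (Copp (Cconj b)) (Copp b') ->
  Cmul a' (Cconj a) = Cmul (Cconj b) b'.
Proof.
  intro U. transitivity (Cmul a' (Copp (Copp (Cconj a)))). cring2. rewrite U. cring2.
Qed.

Lemma step2 (a b : Cplx) : Cmul (Copp (Cconj b)) (Copp b) = Cmul a (Copp (Copp (Cconj a))) -> Nm a = Nm b.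
Proof.
  intro U. apply (f_equal Re) in U. destruct a as [a1 a2], b as [b1 b2].
  unfold Nm, Cmul, Copp, Cconj, Re, Im in *; simpl in *. lra.
Qed.

Theorem theorem1 (q : R -> Cplx) (hq : Schwartz q) :
  let r := reverse_space q in
  (* (1) *)
  (forall (zeta : Cplx) (Y : R -> C2) (v0 : C2),
     eigenfunction q r zeta Y v0 ->
     eigenfunction q r (Copp (Cconj zeta))
       (fun x => sigma1_swap (C2conj (Y (- x))))
       (C2opp (sigma1_swap (C2conj v0))) /\
     (Re zeta <> 0 ->
      forall (Y' : R -> C2) (v' : C2),
        eigenfunction q r (Copp (Cconj zeta)) Y' v' ->
        exists c : Cplx, c <> C0 /\ v' = C2scale c (sigma1_swap (C2conj v0)))) /\
  (* (2) *)
  (forall (zeta : Cplx) (Y : R -> C2) (v0 : C2),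
     Re zeta = 0 -> eigenfunction q r zeta Y v0 ->
     fst v0 <> C0 /\
     exists theta : R, snd v0 = Cmul (fst v0) (Cexp (0, theta))) /\
  (* (3) *)
  (forall (zb : Cplx) (K : R -> C2) (vb0 : C2),
     adj_eigenfunction q r zb K vb0 ->
     adj_eigenfunction q r (Copp (Cconj zb))
       (fun x => sigma1_swap (C2conj (K (- x))))
       (C2opp (sigma1_swap (C2conj vb0))) /\
     (Re zb <> 0 ->
      forall (K' : R -> C2) (vb' : C2),
        adj_eigenfunction q r (Copp (Cconj zb)) K' vb' ->
        exists c : Cplx, c <> C0 /\ vb' = C2scale c (sigma1_swap (C2conj vb0)))) /\
  (* (4) *)
  (forall (zb : Cplx) (K : R -> C2) (vb0 : C2),
     Re zb = 0 -> adj_eigenfunction q r zb K vb0 ->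
     fst vb0 <> C0 /\
     exists theta : R, snd vb0 = Cmul (fst vb0) (Cexp (0, theta))).
Proof.
  cbv zeta.
  split; [|split; [|split]].
  - intros zeta Y v0 Hy. pose proof (sym_dir _ _ _ _ Hy) as Hs. split; [exact Hs|].
    intros _ Y' v' H'.
    pose proof (params_dir q _ hq (proj1 H')) as PP.
    pose proof (geig_dir _ _ _ _ Hs) as G1. pose proof (geig_dir _ _ _ _ H') as G2.
    pose proof (guniq _ _ _ _ _ _ _ _ _ _ _ _ _ PP G1 G2) as U.
    pose proof (gnonzero _ _ _ _ _ _ _ _ _ PP G1 (nzconv _ (proj1 (proj2 Hs)))) as NZ1.
    pose proof (gnonzero _ _ _ _ _ _ _ _ _ PP G2 (nzconv _ (proj1 (proj2 H')))) as NZ2.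
    simpl in U, NZ1.
    assert (NZb : Cconj (snd v0) <> C0).
    { intro E. apply NZ1. rewrite E. cring2. }
    destruct (solve_c (fst v') (snd v') (Cconj (snd v0)) (Cconj (fst v0)) NZb NZ2 (step1 _ _ _ _ U)) as [c [Hc Hv]].
    exists c. split; [exact Hc|]. rewrite (surjective_pairing v'). exact Hv.
  - intros zeta Y v0 Hre Hy. pose proof (sym_dir _ _ _ _ Hy) as Hs.
    rewrite (negconj_id _ Hre) in Hs.
    pose proof (params_dir q _ hq (proj1 Hy)) as PP.
    pose proof (geig_dir _ _ _ _ Hy) as G1. pose proof (geig_dir _ _ _ _ Hs) as G2.
    pose proof (guniq _ _ _ _ _ _ _ _ _ _ _ _ _ PP G1 G2) as U. simpl in U.
    pose proof (gnonzero _ _ _ _ _ _ _ _ _ PP G1 (nzconv _ (proj1 (proj2 Hy)))) as NZ.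
    split; [exact NZ|]. apply unit_phase. exact NZ. apply step2. exact U.
  - intros zb K vb0 Hy. pose proof (sym_adj _ _ _ _ Hy) as Hs. split; [exact Hs|].
    intros _ K' vb' H'.
    pose proof (params_adj q _ hq (proj1 H')) as PP.
    pose proof (geig_adj _ _ _ _ Hs) as G1. pose proof (geig_adj _ _ _ _ H') as G2.
    pose proof (guniq _ _ _ _ _ _ _ _ _ _ _ _ _ PP G1 G2) as U.
    pose proof (gnonzero _ _ _ _ _ _ _ _ _ PP G1 (nzconv _ (proj1 (proj2 Hs)))) as NZ1.
    pose proof (gnonzero _ _ _ _ _ _ _ _ _ PP G2 (nzconv _ (proj1 (proj2 H')))) as NZ2.
    simpl in U, NZ1.
    assert (NZb : Cconj (snd vb0) <> C0).
    { intro E. apply NZ1. rewrite E. cring2. }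
    destruct (solve_c (fst vb') (snd vb') (Cconj (snd vb0)) (Cconj (fst vb0)) NZb NZ2 (step1 _ _ _ _ U)) as [c [Hc Hv]].
    exists c. split; [exact Hc|]. rewrite (surjective_pairing vb'). exact Hv.
  - intros zb K vb0 Hre Hy. pose proof (sym_adj _ _ _ _ Hy) as Hs.
    rewrite (negconj_id _ Hre) in Hs.
    pose proof (params_adj q _ hq (proj1 Hy)) as PP.
    pose proof (geig_adj _ _ _ _ Hy) as G1. pose proof (geig_adj _ _ _ _ Hs) as G2.
    pose proof (guniq _ _ _ _ _ _ _ _ _ _ _ _ _ PP G1 G2) as U. simpl in U.
    pose proof (gnonzero _ _ _ _ _ _ _ _ _ PP G1 (nzconv _ (proj1 (proj2 Hy)))) as NZ.
    split; [exact NZ|]. apply unit_phase. exact NZ. apply step2. exact U.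
Qed.
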